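(* Let $(X,d)$ be a complete $\mathrm{CAT}(0)$-space and $\xi:[0,\ell)\to X$ a self-contracted curve. Then for every $\tau\in[0,\ell)$ and all $t_1,t_2\in(\tau,\ell)$ with $\xi(t_1)\ne\xi(\tau)$ and $\xi(t_2)\ne\xi(\tau)$, we have $\angle[\xi(t_1)\,\xi(\tau)\,\xi(t_2)]<\pi/2$.
   Context: A geodesic metric space $(X,d)$ is a $\mathrm{CAT}(0)$-space if for all $x,y,z\in X$ and every minimal geodesic $\gamma:[0,1]\to X$ from $y$ to $z$ (i.e. $d(\gamma(s),\gamma(t))=|t-s|d(y,z)$), $d^2(x,\gamma(s))\le(1-s)d^2(x,y)+sd^2(x,z)-(1-s)sd^2(y,z)$ for all $s\in[0,1]$; minimal geodesics are then unique, denoted $\gamma_{xy}$. The Euclidean comparison angle $\tilde\angle[yxz]\in[0,\pi]$ is defined by $\cos\tilde\angle[yxz]=\frac{d^2(x,y)+d^2(x,z)-d^2(y,z)}{2d(x,y)d(x,z)}$, and the angle is $\angle[yxz]:=\lim_{s,t\to0}\tilde\angle[\gamma_{xy}(s)\,x\,\gamma_{xz}(t)]$. A map $\xi:[0,\ell)\to X$ (not necessarily continuous) is self-contracted if $d(\xi(t_2),\xi(t_3))\le d(\xi(t_1),\xi(t_3))$ for all $0\le t_1\le t_2\le t_3<\ell$. *)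

(* Defs.v *)
From Stdlib Require Import Reals Lra.
Open Scope R_scope.

Definition is_metric {X : Type} (d : X -> X -> R) : Prop :=
  (forall x y, 0 <= d x y) /\
  (forall x y, d x y = 0 <-> x = y) /\
  (forall x y, d x y = d y x) /\
  (forall x y z, d x z <= d x y + d y z).

Definition complete_metric {X : Type} (d : X -> X -> R) : Prop :=
  forall u : nat -> X,
    (forall eps, eps > 0 -> exists N, forall n m, (n >= N)%nat -> (m >= N)%nat ->
        d (u n) (u m) < eps) ->
    exists x, forall eps, eps > 0 -> exists N, forall n, (n >= N)%nat -> d (u n) x < eps.

(* gamma : [0,1] -> X (given on R, only values on [0,1] matter) is a minimal
   geodesic from y to z. *)
Definition min_geodesic {X : Type} (d : X -> X -> R) (gamma : R -> X) (y z : X) : Prop :=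
  gamma 0 = y /\ gamma 1 = z /\
  forall s t, 0 <= s <= 1 -> 0 <= t <= 1 ->
    d (gamma s) (gamma t) = Rabs (t - s) * d y z.

Definition geodesic_space {X : Type} (d : X -> X -> R) : Prop :=
  forall y z, exists gamma, min_geodesic d gamma y z.

Definition CAT0 {X : Type} (d : X -> X -> R) : Prop :=
  is_metric d /\ geodesic_space d /\
  forall x y z gamma, min_geodesic d gamma y z ->
    forall s, 0 <= s <= 1 ->
      (d x (gamma s))^2 <= (1 - s) * (d x y)^2 + s * (d x z)^2
                           - (1 - s) * s * (d y z)^2.

Definition comp_angle {X : Type} (d : X -> X -> R) (y x z : X) : R :=
  acos (((d x y)^2 + (d x z)^2 - (d y z)^2) / (2 * d x y * d x z)).

(* "angle[y x z] = theta": theta is the limit, as s,t -> 0+, of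
   ~angle[gamma_xy(s) x gamma_xz(t)], for the minimal geodesics from x to y and
   from x to z (unique in a CAT(0) space; we quantify over all of them). *)
Definition is_angle {X : Type} (d : X -> X -> R) (y x z : X) (theta : R) : Prop :=
  forall g1 g2, min_geodesic d g1 x y -> min_geodesic d g2 x z ->
    forall eps, eps > 0 -> exists delta, delta > 0 /\
      forall s t, 0 < s < delta -> 0 < t < delta ->
        Rabs (comp_angle d (g1 s) x (g2 t) - theta) < eps.

(* Domain [0, l) with l in (0, +oo]: None encodes l = +oo. *)
Definition below (l : option R) (t : R) : Prop :=
  match l with None => True | Some l => t < l end.

Definition in_dom (l : option R) (t : R) : Prop := 0 <= t /\ below l t.

Definition self_contracted {X : Type} (d : X -> X -> R) (l : option R) (xi : R -> X) : Prop :=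
  forall t1 t2 t3, 0 <= t1 -> t1 <= t2 -> t2 <= t3 -> below l t3 ->
    d (xi t2) (xi t3) <= d (xi t1) (xi t3).

(* Main.v *)
Require Import Defs.
From Stdlib Require Import Reals.
From Stdlib Require Import Lra Psatz.
Open Scope R_scope.

Lemma div_le_l (a b c : R) : 0 < c -> a <= b * c -> a / c <= b.
Proof.
  intros Hc H. unfold Rdiv. apply Rmult_le_reg_r with c; [lra|].
  rewrite Rmult_assoc, Rinv_l by lra. lra.
Qed.

Lemma dist_geo {X : Type} (d : X -> X -> R) g x y s :
  min_geodesic d g x y -> 0 <= s <= 1 -> d x (g s) = s * d x y.
Proof.
  intros [H0 [H1 H]] Hs.
  rewrite <- H0 at 1. rewrite H by lra. rewrite Rminus_0_r, Rabs_right by lra. reflexivity.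
Qed.

Lemma sub_geo {X : Type} (d : X -> X -> R) g x y s :
  min_geodesic d g x y -> 0 < s <= 1 ->
  min_geodesic d (fun u => g (u * s)) x (g s).
Proof.
  intros Hg Hs. pose proof (dist_geo d g x y s Hg ltac:(lra)) as Hd.
  destruct Hg as [H0 [H1 H]]. split; [|split].
  - rewrite Rmult_0_l. exact H0.
  - rewrite Rmult_1_l. reflexivity.
  - intros u v Hu Hv. rewrite H.
    + rewrite Hd. replace (v * s - u * s) with ((v - u) * s) by ring.
      rewrite Rabs_mult, (Rabs_right s) by lra. ring.
    + split; nra.
    + split; nra.
Qed.

Lemma mono {X : Type} (d : X -> X -> R) g x y P s s' :
  CAT0 d -> min_geodesic d g x y -> 0 < d x y -> 0 < d x P -> 0 < s' -> s' <= s -> s <= 1 ->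
  ((s * d x y)^2 + (d x P)^2 - (d (g s) P)^2) / (2 * (s * d x y) * d x P) <=
  ((s' * d x y)^2 + (d x P)^2 - (d (g s') P)^2) / (2 * (s' * d x y) * d x P).
Proof.
  intros Hc Hg Ha HB Hs' Hss Hs1.
  destruct Hc as [[Hpos [Heq [Hsym Htri]]] [_ Hcat]].
  pose proof (sub_geo d g x y s Hg ltac:(lra)) as Hsub.
  assert (Hl : 0 <= s' / s <= 1).
  { split. apply Rlt_le, Rdiv_lt_0_compat; lra.
    apply div_le_l; lra. }
  pose proof (Hcat P x (g s) _ Hsub (s'/s) Hl) as H.
  simpl in H. replace (s' / s * s) with s' in H by (field; lra).
  rewrite (dist_geo d g x y s Hg ltac:(lra)) in H.
  rewrite (Hsym P x), (Hsym P (g s)), (Hsym P (g s')) in H.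
  set (a := d x y) in *. set (B := d x P) in *.
  set (D := d (g s) P) in *. set (D' := d (g s') P) in *.
  assert (H2 : s * D'^2 <= (s - s') * B^2 + s' * D^2 - (s - s') * s' * s * a^2).
  { apply Rle_trans with (s * ((1 - s'/s) * B^2 + s'/s * D^2 - (1 - s'/s) * (s'/s) * (s * a)^2)).
    - apply Rmult_le_compat_l; lra.
    - right. field. lra. }
  assert (Hp : s' * ((s * a)^2 + B^2 - D^2) <= s * ((s' * a)^2 + B^2 - D'^2)) by nra.
  replace (((s * a)^2 + B^2 - D^2) / (2 * (s * a) * B))
    with ((s' * ((s * a)^2 + B^2 - D^2)) * / (2 * s * s' * a * B)) by (field; lra).
  replace (((s' * a)^2 + B^2 - D'^2) / (2 * (s' * a) * B))
    with ((s * ((s' * a)^2 + B^2 - D'^2)) * / (2 * s * s' * a * B)) by (field; lra).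
  apply Rmult_le_compat_r; [|exact Hp].
  apply Rlt_le, Rinv_0_lt_compat. repeat apply Rmult_lt_0_compat; lra.
Qed.

Lemma geo_unique {X : Type} (d : X -> X -> R) g h x y s :
  CAT0 d -> min_geodesic d g x y -> min_geodesic d h x y -> 0 <= s <= 1 -> g s = h s.
Proof.
  intros Hc Hg Hh Hs.
  pose proof (dist_geo d g x y s Hg Hs) as Hd1.
  destruct Hc as [[Hpos [Heq [Hsym Htri]]] [_ Hcat]].
  pose proof (Hcat (g s) x y h Hh s Hs) as H.
  assert (Hd2 : d (g s) y = (1 - s) * d x y).
  { destruct Hg as [H0 [H1 Hgg]]. rewrite <- H1 at 1. rewrite Hgg by lra.
    rewrite Rabs_right by lra. reflexivity. }
  rewrite Hd2, (Hsym (g s) x), Hd1 in H.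
  apply Heq. pose proof (Hpos (g s) (h s)). nra.
Qed.

Lemma cos_antitone x y : 0 <= x -> y <= PI -> x <= y -> cos y <= cos x.
Proof.
  intros. destruct (Req_dec x y) as [->|]; [lra|].
  apply Rlt_le, cos_decreasing_1; lra.
Qed.

Theorem mainTheorem13 (X : Type) (d : X -> X -> R) (l : option R) (xi : R -> X) :
  CAT0 d -> complete_metric d ->
  self_contracted d l xi ->
  forall tau t1 t2, in_dom l tau ->
    tau < t1 -> below l t1 -> tau < t2 -> below l t2 ->
    xi t1 <> xi tau -> xi t2 <> xi tau ->
    exists theta, is_angle d (xi t1) (xi tau) (xi t2) theta /\ theta < PI / 2.
Proof.
  intros Hc _ Hsc tau t1 t2 [Htau0 _] Ht1 Hb1 Ht2 Hb2 Hn1 Hn2.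
  pose proof Hc as Hc'.
  destruct Hc' as [[Hpos [Heq [Hsym Htri]]] [Hgeo Hcat]].
  set (x := xi tau) in *. set (y := xi t1) in *. set (z := xi t2) in *.
  set (a := d x y). set (b := d x z).
  assert (Ha : 0 < a).
  { destruct (Hpos x y) as [H|H]; [exact H|]. exfalso. apply Hn1. symmetry. apply Heq. auto. }
  assert (Hb : 0 < b).
  { destruct (Hpos x z) as [H|H]; [exact H|]. exfalso. apply Hn2. symmetry. apply Heq. auto. }
  assert (Hkey : (d y z)^2 < a^2 + b^2).
  { destruct (Rle_lt_dec t1 t2).
    - assert (H : d y z <= b) by exact (Hsc tau t1 t2 Htau0 ltac:(lra) r Hb2).
      pose proof (Hpos y z). pose proof (Rmult_lt_0_compat a a Ha Ha). nra.
    - assert (H : d z y <= a) by exact (Hsc tau t2 t1 Htau0 ltac:(lra) ltac:(lra) Hb1).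
      pose proof (Hpos y z). pose proof (Rmult_lt_0_compat b b Hb Hb).
      rewrite (Hsym z y) in H. nra. }
  destruct (Hgeo x y) as [g1 Hg1]. destruct (Hgeo x z) as [g2 Hg2].
  set (F := fun s t => ((s * a)^2 + (t * b)^2 - (d (g1 s) (g2 t))^2) / (2 * (s * a) * (t * b))).
  assert (Fs : forall s s' t, 0 < s' -> s' <= s -> s <= 1 -> 0 < t <= 1 -> F s t <= F s' t).
  { intros s s' t Hs' Hss Hs1 Ht. unfold F.
    pose proof (mono d g1 x y (g2 t) s s' Hc Hg1 Ha) as M.
    rewrite (dist_geo d g2 x z t Hg2 ltac:(lra)) in M. fold a b in M.
    apply M; auto. apply Rmult_lt_0_compat; lra. }
  assert (Ft : forall s t t', 0 < t' -> t' <= t -> t <= 1 -> 0 < s <= 1 -> F s t <= F s t').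
  { intros s t t' Ht' Htt Ht1' Hs. unfold F.
    pose proof (mono d g2 x z (g1 s) t t' Hc Hg2 Hb) as M.
    rewrite (dist_geo d g1 x y s Hg1 ltac:(lra)) in M. fold a b in M.
    rewrite (Hsym (g2 t) (g1 s)), (Hsym (g2 t') (g1 s)) in M.
    replace (2 * (t * b) * (s * a)) with (2 * (s * a) * (t * b)) in M by ring.
    replace (2 * (t' * b) * (s * a)) with (2 * (s * a) * (t' * b)) in M by ring.
    replace ((t * b)^2 + (s * a)^2) with ((s * a)^2 + (t * b)^2) in M by ring.
    replace ((t' * b)^2 + (s * a)^2) with ((s * a)^2 + (t' * b)^2) in M by ring.
    apply M; auto. apply Rmult_lt_0_compat; lra. }
  assert (Fle1 : forall s t, 0 < s <= 1 -> 0 < t <= 1 -> F s t <= 1).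
  { intros s t Hs Ht. unfold F. apply div_le_l.
    - repeat apply Rmult_lt_0_compat; lra.
    - pose proof (dist_geo d g1 x y s Hg1 ltac:(lra)) as D1.
      pose proof (dist_geo d g2 x z t Hg2 ltac:(lra)) as D2.
      pose proof (Htri x (g1 s) (g2 t)) as T1. pose proof (Htri x (g2 t) (g1 s)) as T2.
      pose proof (Hpos (g1 s) (g2 t)). rewrite (Hsym (g2 t) (g1 s)) in T2.
      rewrite D1, D2 in T1, T2. fold a b in T1, T2. nra. }
  assert (F11 : 0 < F 1 1).
  { unfold F. destruct Hg1 as [_ [E1 _]]. destruct Hg2 as [_ [E2 _]].
    rewrite E1, E2. apply Rdiv_lt_0_compat; [nra|].
    repeat apply Rmult_lt_0_compat; lra. }
  set (E := fun r => exists s t, 0 < s <= 1 /\ 0 < t <= 1 /\ r = F s t).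
  assert (HE : bound E).
  { exists 1. intros r [s [t [Hs [Ht ->]]]]. auto. }
  assert (HE1 : exists r, E r).
  { exists (F 1 1), 1, 1. repeat split; lra. }
  destruct (completeness E HE HE1) as [c [Hub Hlub]].
  assert (Hc1 : F 1 1 <= c). { apply Hub. exists 1, 1. repeat split; lra. }
  assert (Hcle : c <= 1). { apply Hlub. intros r [s [t [Hs [Ht ->]]]]. auto. }
  assert (Hacos_lt : acos c < PI / 2).
  { destruct (Rlt_le_dec (acos c) (PI / 2)) as [|Hge]; [assumption|].
    exfalso. pose proof (acos_bound c).
    pose proof (cos_antitone (PI/2) (acos c) ltac:(pose proof PI_RGT_0; lra) ltac:(lra) Hge).
    rewrite cos_PI2, cos_acos in H0 by lra. lra. }
  exists (acos c). split; [|exact Hacos_lt].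
  intros h1 h2 Hh1 Hh2 eps Heps.
  pose proof PI_RGT_0 as HPI.
  pose proof (acos_bound c) as Hab.
  set (phi := Rmin (acos c + eps / 2) PI).
  assert (Hphi : acos c < phi /\ phi <= PI /\ phi <= acos c + eps / 2).
  { unfold phi. split; [|split].
    - apply Rmin_glb_lt; lra.
    - apply Rmin_r.
    - apply Rmin_l. }
  assert (Hv : cos phi < c).
  { rewrite <- (cos_acos c) by lra. apply cos_decreasing_1; lra. }
  assert (Hex : exists s0 t0, 0 < s0 <= 1 /\ 0 < t0 <= 1 /\ cos phi < F s0 t0).
  { destruct (Rlt_le_dec (cos phi) c) as [_|]; [|lra].
    apply Classical_Prop.NNPP. intro Hno.
    assert (Hub' : is_upper_bound E (cos phi)).
    { intros r [s [t [Hs [Ht ->]]]].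
      destruct (Rle_lt_dec (F s t) (cos phi)) as [|Hlt]; [assumption|].
      exfalso. apply Hno. exists s, t. auto. }
    pose proof (Hlub _ Hub'). lra. }
  destruct Hex as [s0 [t0 [Hs0 [Ht0 Hst0]]]].
  exists (Rmin s0 t0). split.
  { apply Rmin_glb_lt; lra. }
  intros s t Hs Ht.
  pose proof (Rmin_l s0 t0). pose proof (Rmin_r s0 t0).
  rewrite <- (geo_unique d g1 h1 x y s Hc Hg1 Hh1 ltac:(lra)).
  rewrite <- (geo_unique d g2 h2 x z t Hc Hg2 Hh2 ltac:(lra)).
  unfold comp_angle.
  rewrite (dist_geo d g1 x y s Hg1 ltac:(lra)), (dist_geo d g2 x z t Hg2 ltac:(lra)).
  fold a b. change (acos (F s t) - acos c) with (acos (F s t) - acos c).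
  assert (Hu1 : cos phi < F s t).
  { apply Rlt_le_trans with (F s0 t0); [exact Hst0|].
    apply Rle_trans with (F s0 t).
    - apply Ft; lra.
    - apply Fs; lra. }
  assert (Hu2 : F s t <= c). { apply Hub. exists s, t. repeat split; lra. }
  pose proof (COS_bound phi) as [Hcb _].
  assert (Hlo : acos c <= acos (F s t)).
  { pose proof (acos_bound (F s t)).
    destruct (Rle_lt_dec (acos c) (acos (F s t))) as [|Hlt]; [assumption|].
    exfalso. pose proof (cos_decreasing_1 (acos (F s t)) (acos c) ltac:(lra) ltac:(lra) ltac:(lra) ltac:(lra) Hlt) as HH.
    rewrite !cos_acos in HH by lra. lra. }
  assert (Hhi : acos (F s t) < phi).
  { pose proof (acos_bound (F s t)).
    destruct (Rlt_le_dec (acos (F s t)) phi) as [|Hge]; [assumption|].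
    exfalso. pose proof (cos_antitone phi (acos (F s t)) ltac:(lra) ltac:(lra) Hge) as HH.
    rewrite cos_acos in HH by lra. lra. }
  change (Rabs (acos (F s t) - acos c) < eps). rewrite Rabs_right; lra.
Qed.
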